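(* Let $\Gamma_M$ ($M>0$) be a family of nonatomic routing games with a single OD pair with demand $M$, sharing the same graph, path set and edge costs $(c_e)_{e\in\mathcal E}$. Suppose that for every edge $e$ there is $q_e\ge 0$ such that $\lim_{x\to \infty}c_e(x)/x^{q_e}$ is finite and nonzero. Then $\mathrm{PoA}(\Gamma_M)\to 1$ as $M\to \infty$.
   Context: A nonatomic routing game with a single OD pair consists of a finite directed multigraph with edge set $\mathcal E$, a nonempty finite set $\mathcal P$ of paths from an origin to a destination, a demand $M>0$, and continuous nondecreasing edge costs $c_e:[0,\infty)\to[0,\infty)$. Feasible flows: $f\in\mathbb R_+^{\mathcal P}$ with $\sum_p f_p=M$; loads $x_e=\sum_{p\ni e}f_p$; path costs $c_p(f)=\sum_{e\in p}c_e(x_e)$. A Wardrop equilibrium is a feasible $f^*$ with $c_p(f^* )\le c_{p'}(f^* )$ whenever $f^*_p>0$. Social cost $L(x)=\sum_e x_ec_e(x_e)$; $\mathrm{Opt}$ is its minimum over feasible loads, $\mathrm{Eq}=L(x^* )$ at an equilibrium load, and $\mathrm{PoA}=\mathrm{Eq}/\mathrm{Opt}$; it is assumed that $\mathrm{Opt}>0$ (otherwise $\mathrm{PoA}:=1$). *)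

(* Defs.v *)
From HB Require Import structures.
From mathcomp Require Import all_boot all_order all_algebra.
From mathcomp Require Import all_classical all_reals all_analysis.
Set Implicit Arguments. Unset Strict Implicit. Unset Printing Implicit Defensive.
Import Order.TTheory GRing.Theory Num.Theory.
Import numFieldNormedType.Exports.
Local Open Scope ring_scope.

Section Routing.
Variables (R : realType) (V E P : finType).
Variables (tl hd : E -> V) (o d : V).

Definition is_od_path (s : seq E) : bool :=
  if s is e :: s' then
    [&& tl e == o, path (fun e1 e2 => hd e1 == tl e2) e s',
        hd (last e s') == d & uniq (o :: map hd s)]
  else false.

Variables (pth : P -> seq E) (c : E -> R -> R).

Definition feasible (M : R) (f : P -> R) : Prop :=
  (forall p, 0 <= f p) /\ \sum_(p : P) f p = M.

Definition load (f : P -> R) (e : E) : R := \sum_(p : P | e \in pth p) f p.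

Definition path_cost (f : P -> R) (p : P) : R :=
  \sum_(e <- pth p) c e (load f e).

Definition wardrop_eq (M : R) (f : P -> R) : Prop :=
  feasible M f /\ forall p p', 0 < f p -> path_cost f p <= path_cost f p'.

Definition social_cost (f : P -> R) : R :=
  \sum_(e : E) load f e * c e (load f e).

End Routing.

(* Main.v *)
Require Import Defs.
From HB Require Import structures.
From mathcomp Require Import all_boot all_order all_algebra.
From mathcomp Require Import all_classical all_reals all_analysis.
From mathcomp Require Import ring lra.
Import Order.TTheory GRing.Theory Num.Theory.
Import numFieldNormedType.Exports.
Local Open Scope ring_scope.
Local Open Scope classical_set_scope.

Section S. Variable R : realType.
Implicit Types (x y z D r s k : R).

Lemma near_ex (P : R -> Prop) : (\forall x \near +oo, P x) -> exists X, 1 <= X /\ forall x, X <= x -> P x.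
Proof.
case=> M [Mr HM]; exists (Num.max 1 (M+1)); split; first by rewrite le_max lexx.
move=> x; rewrite ge_max => /andP[_ h]; apply: HM; rewrite (lt_le_trans _ h) //.
by rewrite ltrDl.
Qed.
Lemma ex_near (P : R -> Prop) X : (forall x, X <= x -> P x) -> \forall x \near +oo, P x.
Proof.
move=> H; exists X; split; first exact: num_real.
by move=> x /ltW; apply: H.
Qed.

Lemma tangent D y z : 0 <= D -> 0 <= y -> 0 <= z ->
  z * z `^ D <= y * y `^ D + (D + 1) * (z `^ D * (z - y)).
Proof.
move=> D0 y0 z0; have [->|Dp] := eqVneq D 0.
  rewrite !powRr0 !mulr1 add0r mul1r; lra.
have Dg : 0 < D by rewrite lt0r Dp.
have h := @conjugate_powR R (z `^ D) y ((D+1)/D) (D+1) (powR_ge0 _ _) y0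
  (divr_gt0 (ltr_wpDl (ltW Dg) ltr01) Dg) (ltr_wpDl (ltW Dg) ltr01).
have D1 : D + 1 != 0 by rewrite gt_eqF // ltr_wpDl // ltW.
have /h {}h : ((D + 1) / D)^-1 + (D + 1)^-1 = 1.
  by rewrite invf_div; field.
rewrite -powRrM mulrCA divff ?mulr1 // in h.
have e : forall t, 0 <= t -> t `^ (D + 1) = t * t `^ D.
  move=> t t0; rewrite powRD ?powRr1 1?mulrC //.
  by rewrite (negbTE D1).
rewrite !e // in h.
have h2 : (D + 1) * (z `^ D * y) <= D * (z * z `^ D) + y * y `^ D.
  have -> : D * (z * z `^ D) + y * y `^ D =
     (D + 1) * (z * z `^ D / ((D + 1) / D) + y * y `^ D / (D + 1)).
  by field; rewrite D1 Dp.
  by rewrite ler_pM2l ?(lt_le_trans ltr01) ?lerDr.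
have -> : z `^ D * (z - y) = z * z `^ D - z `^ D * y by ring.
rewrite -subr_ge0.
have -> : y * y `^ D + (D + 1) * (z * z `^ D - z `^ D * y) - z * z `^ D =
  D * (z * z `^ D) + y * y `^ D - (D + 1) * (z `^ D * y) by ring.
by rewrite subr_ge0.
Qed.

Lemma pow_ev r s k : r < s -> exists X, 1 <= X /\ forall M, X <= M -> k * M `^ r <= M `^ s.
Proof.
move=> rs; have [k0|kp] := lerP k 0.
  exists 1; split => // M _; apply: le_trans (powR_ge0 _ _).
  by rewrite mulr_le0_ge0 ?powR_ge0.
exists (Num.max 1 (k `^ (s - r)^-1)); split; first by rewrite le_max lexx.
move=> M; rewrite ge_max => /andP[M1 Mk].
have M0 : 0 < M by rewrite (lt_le_trans ltr01).
have sr : 0 < s - r by rewrite subr_gt0.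
have -> : M `^ s = M `^ (s - r) * M `^ r.
  by rewrite -powRD ?subrK // (gt_eqF M0) implybT.
rewrite ler_pM2r ?powR_gt0 //.
have := ge0_ler_powR (ltW sr) _ _ Mk.
rewrite -powRrM mulVf ?gt_eqF // powRr1 ?(ltW kp) //; apply.
  by rewrite nnegrE powR_ge0.
by rewrite nnegrE ltW.
Qed.
End S.
Arguments near_ex {R P}.
Arguments ex_near {R P}.
Arguments pow_ev {R r s}.
Arguments tangent {R}.

Section Edge.
Variable R : realType.
Variables (c : R -> R) (q a : R).
Hypotheses (c_ge0 : forall x, 0 <= x -> 0 <= c x)
  (c_mono : forall x y, 0 <= x -> x <= y -> c x <= c y)
  (q_ge0 : 0 <= q)
  (hlim : (c x / x `^ q) @[x --> +oo] --> a).

Lemma asym d : 0 < d -> exists X, 1 <= X /\ forall x, X <= x ->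
  (a - d) * x `^ q <= c x /\ c x <= (a + d) * x `^ q.
Proof.
move=> d0; have [X [X1 HX]] := near_ex (cvgr_distC_le _ _ hlim _ d0).
exists X; split => // x Xx.
have x0 : 0 < x by rewrite (lt_le_trans ltr01) // (le_trans X1).
have xq : 0 < x `^ q by rewrite powR_gt0.
have := HX x Xx; rewrite ler_distl => /andP[h1 h2].
have e : c x = c x / x `^ q * x `^ q by rewrite divfK // gt_eqF.
split; rewrite [c x]e.
  by rewrite ler_pM2r.
by rewrite ler_pM2r.
Qed.

Lemma a_ge0 : 0 <= a.
Proof.
rewrite leNgt; apply/negP => a0.
have [X [X1 HX]] := near_ex (cvgr_lt a hlim 0 a0).
have := HX X (lexx _); rewrite ltNge; apply/negP.
by rewrite divr_ge0 ?powR_ge0 // c_ge0 // (le_trans ler01).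
Qed.

Lemma c_le_a : q = 0 -> forall z, 0 <= z -> c z <= a.
Proof.
move=> q00 z z0; rewrite leNgt; apply/negP => az.
have d0 : 0 < (c z - a) / 2 by rewrite divr_gt0 // subr_gt0.
have [X [X1 HX]] := asym _ d0.
have hX : X <= Num.max X z by rewrite le_max lexx.
have := HX (Num.max X z) hX; rewrite q00 powRr0 mulr1 => -[_ h].
have : c z <= c (Num.max X z) by apply: c_mono => //; rewrite le_max lexx orbT.
move=> h2; have := le_trans h2 h; lra.
Qed.


Definition PE D d M z y :=
  z * c z + (D + 1) * (c z * (y - z)) <=
  (1 + (D + 1) * d) * (y * c y) + (D + 3) * d * (M * M `^ D).

Definition PEH K D M z y lam :=
  [/\ 0 <= z <= M, 0 <= y <= M, 0 <= lam <= K * M `^ D & (0 < z -> c z <= lam)].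

Lemma S_ge1 (D M : R) : 0 <= D -> 1 <= M -> 1 <= M `^ D.
Proof. by move=> D0 M1; rewrite -(powRr0 M) ler_powR. Qed.

Lemma pow_mono (D z M : R) : 0 <= D -> 0 <= z -> z <= M -> z `^ D <= M `^ D.
Proof. by move=> D0 z0 zM; apply: ge0_ler_powR => //; rewrite nnegrE (le_trans z0). Qed.

Lemma caseA D d K : 0 <= D -> q < D -> 0 < d -> exists X, 1 <= X /\ forall M, X <= M ->
  forall z y lam, PEH K D M z y lam -> PE D d M z y.
Proof.
move=> D0 qD d0.
have [X1 [X11 H1]] := asym _ ltr01.
have [X2 [X21 H2]] := pow_ev ((a + 1) / d) qD.
exists (Num.max X1 X2); split; first by rewrite le_max X11.
move=> M; rewrite ge_max => /andP[M1 M2] z y lam [/andP[z0 zM] /andP[y0 yM] _ _].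
have M0 : 1 <= M by rewrite (le_trans X11).
set S := M `^ D.
have cM : c M <= d * S.
  apply: (le_trans (proj2 (H1 M M1))).
  have := H2 M M2; rewrite -/S => h.
  have -> : (a + 1) * M `^ q = d * ((a + 1) / d * M `^ q).
    by field; rewrite gt_eqF.
  by rewrite ler_pM2l.
have cz0 : 0 <= c z by apply: c_ge0.
have czM : c z <= d * S by rewrite (le_trans _ cM) // c_mono.
have S0 : 0 <= S by apply: powR_ge0.
have h1 : z * c z <= M * (d * S) by rewrite ler_pM.
have h2 : c z * (y - z) <= d * S * M.
  rewrite (@le_trans _ _ (c z * y)) //.
    by rewrite ler_wpM2l // lerBlDr lerDl.
  by rewrite ler_pM.
have h3 : (D + 1) * (c z * (y - z)) <= (D + 1) * (d * S * M).
  by rewrite ler_wpM2l // addr_ge0.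
have h4 : 0 <= (1 + (D + 1) * d) * (y * c y).
  by rewrite mulr_ge0 // ?mulr_ge0 ?c_ge0 // addr_ge0 // mulr_ge0 // ?addr_ge0 // ltW.
rewrite /PE -/S; apply: (le_trans (lerD h1 h3)).
rewrite -subr_ge0.
have -> : (1 + (D + 1) * d) * (y * c y) + (D + 3) * d * (M * S) -
   (M * (d * S) + (D + 1) * (d * S * M)) = (1 + (D + 1) * d) * (y * c y) + d * (M * S) by ring.
have cy0 : 0 <= c y by apply: c_ge0.
have h5 : 0 <= 1 + (D + 1) * d by rewrite addr_ge0 // mulr_ge0 // ?addr_ge0 // ltW.
have M00 : 0 <= M by rewrite (le_trans ler01).
by rewrite addr_ge0 // mulr_ge0 // ?mulr_ge0 // ltW.
Qed.

Lemma caseC D d K : 0 < a -> 0 <= D -> D < q -> 0 < d -> 0 <= K -> exists X, 1 <= X /\ forall M, X <= M ->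
  forall z y lam, PEH K D M z y lam -> PE D d M z y.
Proof.
move=> a0 D0 Dq d0 K0.
set c0 := c 0.
have c00 : 0 <= c0 by apply: c_ge0.
set eta := d / (K + c0 + 1).
have Kc1 : 0 < K + c0 + 1 by rewrite ltr_wpDl // addr_ge0.
have eta0 : 0 < eta by rewrite divr_gt0.
set N := (K + c0) / d + K + 1.
have [X1 [X11 H1]] := asym _ (divr_gt0 a0 (ltr0Sn _ 1)).
set k := N / (a / 2 * eta `^ q).
have [X2 [X21 H2]] := pow_ev k Dq.
exists (Num.max (X1 / eta) X2); split; first by rewrite le_max X21 orbT.
move=> M; rewrite ge_max => /andP[M1 M2] z y lam [/andP[z0 zM] /andP[y0 yM] /andP[l0 lK] czl].
have M0 : 1 <= M by rewrite (le_trans X21).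
set S := M `^ D.
have S1 : 1 <= S by apply: S_ge1.
have S0 : 0 < S by rewrite (lt_le_trans ltr01).
have Mp : 0 < M by rewrite (lt_le_trans ltr01).
have etaM : X1 <= eta * M by rewrite mulrC -ler_pdivrMr.
have key : N * S <= c (eta * M).
  apply: (le_trans _ (proj1 (H1 _ etaM))).
  rewrite powRM ?(ltW eta0) ?(ltW Mp) // (_ : a - a / 2 = a / 2); last by field.
  have := H2 M M2; rewrite -/S /k => h.
  set w := a / 2 * eta `^ q in h *.
  have p : 0 < w by rewrite mulr_gt0 ?divr_gt0 ?powR_gt0.
  have -> : N * S = w * (N / w * S) by rewrite mulrA [w * _]mulrC divfK ?gt_eqF.
  by rewrite mulrA -/w ler_pM2l.
have NK : K * S < N * S.
  rewrite ltr_pM2r // /N -addrA; apply: ltr_wpDl; last by rewrite ltrDl.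
  by rewrite divr_ge0 ?addr_ge0 // ltW.
have cz0 : 0 <= c z by apply: c_ge0.
have cy0 : 0 <= c y by apply: c_ge0.
have d00 : 0 <= d by apply: ltW.
have M00 : 0 <= M by apply: ltW.
have S00 : 0 <= S by apply: ltW.
have cyeta : eta * M <= y -> (K + c0) * S <= d * c y.
  move=> ey; have := le_trans key (c_mono _ _ (mulr_ge0 (ltW eta0) (ltW Mp)) ey).
  move=> h; apply: (@le_trans _ _ (d * (N * S))); last by rewrite ler_pM2l.
  have -> : d * (N * S) = ((K + c0) + d * (K + 1)) * S.
    by rewrite /N mulrA; congr (_ * _); field; rewrite gt_eqF.
  by rewrite ler_pM2r // lerDl mulr_ge0 ?addr_ge0 // ltW.
have czb : c z <= (K + c0) * S.
  have [zp|] := ltP 0 z.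
    rewrite (le_trans (czl zp)) // (le_trans lK) //.
    by apply: ler_wpM2r; [exact: ltW S0 | rewrite lerDl].
  move=> z00; have -> : z = 0 by apply/eqP; rewrite eq_le z00.
  rewrite -/c0 mulrDl; apply: ler_wpDl; first by rewrite mulr_ge0 // ltW.
  by rewrite -[X in X <= _]mulr1 ler_wpM2l.
have etaK : eta * K <= d.
  have h : K / (K + c0 + 1) <= 1 by rewrite ler_pdivrMr // mul1r -addrA lerDl addr_ge0.
  rewrite /eta -mulrA [X in d * X]mulrC -[X in _ <= X]mulr1 ler_wpM2l // ltW //.
have etaKc : (K + c0) * eta <= d.
  have h : (K + c0) / (K + c0 + 1) <= 1 by rewrite ler_pdivrMr // mul1r lerDl.
  rewrite /eta mulrC -mulrA [X in d * X]mulrC -[X in _ <= X]mulr1 ler_wpM2l // ltW //.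
have i1 : z * c z <= d * (M * S).
  have [zp|] := ltP 0 z; last first.
    move=> z00; have -> : z = 0 by apply/eqP; rewrite eq_le z00.
    by rewrite mul0r !mulr_ge0.
  have czK : c z <= K * S by rewrite (le_trans (czl zp)).
  have zeta : z < eta * M.
    rewrite ltNge; apply/negP => ez.
    have := le_trans key (c_mono _ _ (mulr_ge0 (ltW eta0) (ltW Mp)) ez).
    by move=> h; have := lt_le_trans NK (le_trans h czK); rewrite ltxx.
  apply: (@le_trans _ _ (eta * M * (K * S))); first by rewrite ler_pM // ltW.
  have -> : eta * M * (K * S) = (eta * K) * (M * S) by ring.
  by rewrite ler_pM2r // mulr_gt0.
have i2 : c z * (y - z) <= d * (y * c y) + d * (M * S).
  apply: (@le_trans _ _ (c z * y)); first by rewrite ler_wpM2l // lerBlDr lerDl.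
  have [ey|ye] := leP (eta * M) y.
    apply: ler_wpDr; first by rewrite !mulr_ge0.
    rewrite [c z * y]mulrC mulrCA; apply: ler_wpM2l => //.
    exact: le_trans czb (cyeta ey).
  apply: ler_wpDl; first by rewrite !mulr_ge0.
  apply: (@le_trans _ _ ((K + c0) * S * (eta * M))); first by rewrite ler_pM // ltW.
  have -> : (K + c0) * S * (eta * M) = ((K + c0) * eta) * (M * S) by ring.
  by rewrite ler_pM2r // mulr_gt0.
have i3 : (D + 1) * (c z * (y - z)) <= (D + 1) * (d * (y * c y) + d * (M * S)).
  by rewrite ler_wpM2l // addr_ge0.
rewrite /PE -/S; apply: (le_trans (lerD i1 i3)).
rewrite -subr_ge0.
have -> : (1 + (D + 1) * d) * (y * c y) + (D + 3) * d * (M * S) -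
   (d * (M * S) + (D + 1) * (d * (y * c y) + d * (M * S))) = y * c y + d * (M * S) by ring.
by rewrite addr_ge0 // ?mulr_ge0 ?mulr_ge0 // ?ltW.
Qed.

Lemma caseB d K : 0 < d -> exists X, 1 <= X /\ forall M, X <= M ->
  forall z y lam, PEH K q M z y lam -> PE q d M z y.
Proof.
move=> d0.
set d' := d / 2.
have d'0 : 0 < d' by rewrite divr_gt0.
have [Y [Y1 HY]] := asym _ d'0.
have Y0 : 0 <= Y by rewrite (le_trans ler01).
have cY0 : 0 <= c Y by apply: c_ge0.
have a0 : 0 <= a by apply: a_ge0.
set C1 := Y * c Y.
set C2 := a * (Y * Y `^ q).
set C3 := (a * Y `^ q + c Y) * Y.
set Ctot := C1 + C2 + (q + 1) * C3.
have [X2 [X21 H2]] : exists X2, 1 <= X2 /\ forall M, X2 <= M -> 0 < q ->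
    (q + 1) * c Y <= d' * M `^ q.
  have [qp|q0] := ltP 0 q; last first.
    by exists 1; split => // M _ qp; have := lt_le_trans qp q0; rewrite ltxx.
  have [X2 [X21 H2]] := pow_ev ((q + 1) * c Y / d') qp.
  exists X2; split => // M M2 _; have := H2 M M2; rewrite powRr0 mulr1 => h.
  have -> : (q + 1) * c Y = d' * ((q + 1) * c Y / d') by field; rewrite gt_eqF.
  by rewrite ler_pM2l.
exists (Num.max Y (Num.max (Ctot / d') X2)); split; first by rewrite le_max Y1.
move=> M; rewrite !ge_max => /andP[MY /andP[MC M2]] z y lam [/andP[z0 zM] /andP[y0 yM] _ _].
have M1 : 1 <= M by rewrite (le_trans Y1).
have M00 : 0 <= M by rewrite (le_trans ler01).
set S := M `^ q.
set T := M * S.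
have S1 : 1 <= S by apply: S_ge1.
have S00 : 0 <= S by rewrite (le_trans ler01).
have MT : M <= T by rewrite /T -[X in X <= _]mulr1 ler_wpM2l.
have d'00 : 0 <= d' by apply: ltW.
have T0 : 0 <= T by rewrite mulr_ge0.
have d'T0 : 0 <= d' * T by rewrite mulr_ge0.
have zS : z `^ q <= S by apply: pow_mono.
have yS : y `^ q <= S by apply: pow_mono.
have zq0 : 0 <= z `^ q by apply: powR_ge0.
have yq0 : 0 <= y `^ q by apply: powR_ge0.
have Yq0 : 0 <= Y `^ q by apply: powR_ge0.
have cz0 : 0 <= c z by apply: c_ge0.
have cy0 : 0 <= c y by apply: c_ge0.
have C10 : 0 <= C1 by rewrite mulr_ge0.
have C20 : 0 <= C2 by rewrite !mulr_ge0.
have C30 : 0 <= C3 by rewrite !mulr_ge0 // addr_ge0 // mulr_ge0.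
have zzT : z * z `^ q <= T by rewrite ler_pM.
have yyT : y * y `^ q <= T by rewrite ler_pM.
have Ctot_le : Ctot <= d' * T.
  apply: (@le_trans _ _ (d' * M)); last by rewrite ler_wpM2l.
  by rewrite mulrC -ler_pdivrMr.
have Eqerr : z * c z <= a * (z * z `^ q) + d' * T + C1.
  have [Yz|zY] := leP Y z.
    have [_ h] := HY z Yz.
    apply: (@le_trans _ _ (z * ((a + d') * z `^ q))); first by rewrite ler_wpM2l.
    have -> : z * ((a + d') * z `^ q) = a * (z * z `^ q) + d' * (z * z `^ q) by ring.
    rewrite -addrA lerD2l; apply: ler_wpDr => //; by rewrite ler_wpM2l.
  have h : z * c z <= C1 by rewrite ler_pM // ?c_mono // ltW.
  apply: (le_trans h); rewrite lerDr addr_ge0 // mulr_ge0 //.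
  by rewrite mulr_ge0.
have Lerr : a * (y * y `^ q) <= y * c y + d' * T + C2.
  have [Yy|yY] := leP Y y.
    have [h _] := HY y Yy.
    have -> : a * (y * y `^ q) = y * ((a - d') * y `^ q) + d' * (y * y `^ q) by ring.
    rewrite -addrA; apply: lerD; first by rewrite ler_wpM2l.
    by apply: ler_wpDr => //; rewrite ler_wpM2l.
  have h : a * (y * y `^ q) <= C2.
    apply: ler_wpM2l => //; apply: ler_pM => //; first exact: ltW.
    by apply: pow_mono => //; apply: ltW.
  by apply: (le_trans h); rewrite lerDr addr_ge0 // mulr_ge0.
have Verr : (q + 1) * ((a * z `^ q - c z) * (z - y)) <=
    (q + 1) * (d' * T + C3) + d' * T.
  have q10 : 0 <= q + 1 by rewrite addr_ge0.
  have [Yz|zY] := leP Y z.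
    have [h1 h2] := HY z Yz.
    apply: ler_wpDr => //; apply: ler_wpM2l => //.
    apply: ler_wpDr => //.
    have [yz|zy] := leP y z.
      apply: (@le_trans _ _ ((d' * z `^ q) * (z - y))).
        by rewrite ler_wpM2r ?subr_ge0 //; lra.
      rewrite -mulrA. apply: ler_wpM2l => //. rewrite /T mulrC. apply: ler_pM => //; rewrite ?subr_ge0 //; lra.
    have -> : (a * z `^ q - c z) * (z - y) = (c z - a * z `^ q) * (y - z) by ring.
    apply: (@le_trans _ _ ((d' * z `^ q) * (y - z))).
      by apply: ler_wpM2r; [rewrite subr_ge0 ltW | lra].
    rewrite -mulrA; apply: ler_wpM2l => //; rewrite /T mulrC.
    apply: ler_pM => //; rewrite ?subr_ge0 ?(ltW zy) //; lra.
  have [yz|zy] := leP y z.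
    apply: ler_wpDr => //; apply: ler_wpM2l => //.
    apply: ler_wpDl => //; rewrite /C3.
    apply: (@le_trans _ _ ((a * z `^ q) * (z - y))).
      by rewrite ler_wpM2r ?subr_ge0 // lerBlDr lerDl.
    rewrite mulrDl; apply: ler_wpDr; first by rewrite mulr_ge0.
    rewrite ler_pM // ?mulr_ge0 ?subr_ge0 //.
      by rewrite ler_wpM2l // pow_mono // ltW.
    by rewrite lerBlDr (le_trans (ltW zY)) // lerDl.
  have -> : (a * z `^ q - c z) * (z - y) = (c z - a * z `^ q) * (y - z) by ring.
  have [qp|q0] := ltP 0 q.
    have h := H2 M M2 qp.
    apply: (@le_trans _ _ ((q + 1) * (c Y * M))).
      apply: ler_wpM2l => //.
      apply: (@le_trans _ _ (c z * (y - z))).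
        by rewrite mulrBl gerBl mulr_ge0 // ?mulr_ge0 // subr_ge0 ltW.
      apply: ler_pM => //; first by rewrite subr_ge0 ltW.
        exact: c_mono _ _ z0 (ltW zY).
      by rewrite lerBlDr (le_trans yM) // lerDl.
    apply: ler_wpDl; first by rewrite mulr_ge0 // addr_ge0 // mulr_ge0.
    by rewrite mulrA /T mulrCA (mulrC M) ler_wpM2r.
  have qz : q = 0 by apply/eqP; rewrite eq_le q0 q_ge0.
  have cza : c z <= a * z `^ q by rewrite qz powRr0 mulr1 c_le_a.
  apply: (@le_trans _ _ 0).
    apply: mulr_ge0_le0 => //; apply: mulr_le0_ge0; [by rewrite subr_le0 | by rewrite subr_ge0 ltW].
  by rewrite addr_ge0 // ?mulr_ge0 // addr_ge0 // mulr_ge0.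
have tg := tangent q y z q_ge0 y0 z0.
have tga : a * (z * z `^ q) <= a * (y * y `^ q) + (q + 1) * (a * (z `^ q * (z - y))).
  have := ler_wpM2l a0 tg; rewrite mulrDr.
  by have -> : a * ((q + 1) * (z `^ q * (z - y))) = (q + 1) * (a * (z `^ q * (z - y))) by ring.
have e1 : (q + 1) * (a * (z `^ q * (z - y))) =
   (q + 1) * (c z * (z - y)) + (q + 1) * ((a * z `^ q - c z) * (z - y)) by ring.
rewrite e1 in tga.
have e2 : (q + 1) * (c z * (y - z)) = - ((q + 1) * (c z * (z - y))) by ring.
rewrite /PE -/S -/T e2.
have h3 : 0 <= (q + 1) * d * (y * c y) by rewrite !mulr_ge0 // ?addr_ge0 // ltW.
have h4 : d' * T <= d * T by rewrite ler_wpM2r // /d' ler_pdivrMr // ler_pMr // ler1n.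
have e3 : (1 + (q + 1) * d) * (y * c y) + (q + 3) * d * T =
   y * c y + (q + 1) * d * (y * c y) + (q + 1) * (d' * T) + (q + 1) * (d' * T) + d * T + d * T.
  by rewrite /d'; field.
rewrite e3.
have dd : d = 2 * d' by rewrite /d'; field.
have h6 : 0 <= (q + 1) * (d' * T) by rewrite mulr_ge0 // addr_ge0.
move: Ctot_le; rewrite /Ctot => Ctot_le.
clearbody d' T C1 C2 C3.
have dT : d * T = 2 * (d' * T) by rewrite dd mulrA.
lra.
Qed.

Lemma edge_all D d K : 0 < a -> 0 <= D -> 0 < d -> 0 <= K -> exists X, 1 <= X /\ forall M, X <= M ->
  forall z y lam, PEH K D M z y lam -> PE D d M z y.
Proof.
move=> a0 D0 d0 K0; have [qD|Dq|qD] := ltgtP q D.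
- exact: caseA.
- exact: caseC.
- by rewrite -qD; apply: caseB.
Qed.

Lemma edge_up D : q <= D -> exists X, 1 <= X /\ forall M, X <= M -> c M <= (a + 1) * M `^ D.
Proof.
move=> qD; have [X [X1 HX]] := asym _ ltr01.
exists X; split => // M XM; have [_ h] := HX M XM.
apply: (le_trans h); apply: ler_wpM2l.
  by rewrite addr_ge0 // a_ge0.
by apply: ler_powR => //; rewrite (le_trans X1).
Qed.

Lemma edge_low D n : 0 < a -> D <= q -> 1 <= n -> exists X, 1 <= X /\ forall M, X <= M ->
  forall y, M / n <= y -> a / 2 * (n^-1 * n^-1 `^ D) * (M * M `^ D) <= y * c y.
Proof.
move=> a0 Dq n1.
have n0 : 0 < n by rewrite (lt_le_trans ltr01).
have [Y [Y1 HY]] := asym _ (divr_gt0 a0 (ltr0Sn _ 1)).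
exists (Num.max (Y * n) n); split; first by rewrite le_max n1 orbT.
move=> M; rewrite ge_max => /andP[MY Mn] y My.
have Mn1 : 1 <= M / n by rewrite ler_pdivlMr // mul1r.
have Mn0 : 0 <= M / n by rewrite (le_trans ler01).
have YMn : Y <= M / n by rewrite ler_pdivlMr.
have y0 : 0 <= y by rewrite (le_trans Mn0).
have [h _] := HY y (le_trans YMn My).
rewrite (_ : a - a / 2 = a / 2) in h; last by field.
have h2 : (M / n) `^ D <= y `^ q.
  apply: (@le_trans _ _ ((M / n) `^ q)); first by apply: ler_powR.
  by apply: pow_mono.
have ni : 0 <= n^-1 by rewrite invr_ge0 ltW.
have M0 : 0 <= M by rewrite (le_trans _ Mn) // (le_trans ler01).
have e : (M / n) `^ D = M `^ D * n^-1 `^ D by rewrite powRM.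
rewrite e in h2.
have h3 : a / 2 * (M `^ D * n^-1 `^ D) <= c y.
  apply: le_trans h; apply: ler_wpM2l => //; by rewrite divr_ge0 // ltW.
have -> : a / 2 * (n^-1 * n^-1 `^ D) * (M * M `^ D) = (M / n) * (a / 2 * (M `^ D * n^-1 `^ D)) by ring.
apply: ler_pM => //.
by rewrite mulr_ge0 ?divr_ge0 ?mulr_ge0 ?powR_ge0 // ltW.
Qed.
End Edge.

Section Flow.
Variables (R : realType) (V E P : finType).
Variables (tl hd : E -> V) (o d : V) (pth : P -> seq E) (c : E -> R -> R).
Hypothesis Hpaths : forall p, is_od_path tl hd o d (pth p).
Hypothesis Hc_ge0 : forall e x, 0 <= x -> 0 <= c e x.
Hypothesis Hc_mono : forall e x y, 0 <= x -> x <= y -> c e x <= c e y.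

Lemma pth_uniq p : uniq (pth p).
Proof.
have := Hpaths p; rewrite /is_od_path; case: (pth p) => // e s.
case/and4P => _ _ _; rewrite cons_uniq => /andP[_]; exact: map_uniq.
Qed.

Lemma pth_nil p : pth p <> [::].
Proof. by have := Hpaths p; rewrite /is_od_path; case: (pth p). Qed.

Lemma exch (g : E -> R) (f : P -> R) :
  \sum_e load pth f e * g e = \sum_p f p * \sum_(e <- pth p) g e.
Proof.
rewrite /load.
under eq_bigr => e _ do rewrite big_distrl /= big_mkcond /=.
rewrite exchange_big /=; apply: eq_bigr => p _.
rewrite big_distrr /= [RHS]big_uniq ?pth_uniq //= [RHS]big_mkcond /=.
by apply: eq_bigr => e _; case: ifP.
Qed.

Variable M : R.
Hypothesis M0 : 0 < M.

Lemma load_ge0 (f : P -> R) : feasible M f -> forall e, 0 <= load pth f e.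
Proof. by case=> f0 _ e; apply: sumr_ge0 => p _; apply: f0. Qed.

Lemma load_leM (f : P -> R) : feasible M f -> forall e, load pth f e <= M.
Proof.
case=> f0 fs e; rewrite -fs /load [X in _ <= X](bigID (fun p => e \in pth p)) /=.
by rewrite lerDl sumr_ge0.
Qed.

Lemma load_ge (f : P -> R) : feasible M f -> forall e p, e \in pth p -> f p <= load pth f e.
Proof.
case=> f0 _ e p ep; rewrite /load (bigD1 p) //= lerDl sumr_ge0 // => i _; exact: f0.
Qed.

Lemma pos_flow (f : P -> R) : feasible M f -> exists p, 0 < f p.
Proof.
case=> f0 fs; apply/not_existsP => h.
have : \sum_p f p <= 0.
  apply: sumr_le0 => p _; rewrite leNgt; apply/negP => hp; exact: (h p).
by rewrite fs leNgt M0.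
Qed.

Lemma max_flow (p0 : P) (f : P -> R) : feasible M f -> exists p, M / #|P|%:R <= f p.
Proof.
case=> f0 fs.
case: (@arg_maxP _ _ _ p0 xpredT f isT) => pm _ hpm.
exists pm.
have n0 : (0 < #|P|)%N by apply/card_gt0P; exists p0.
rewrite ler_pdivrMr ?ltr0n // -fs.
have -> : f pm * #|P|%:R = \sum_(p : P) f pm by rewrite sumr_const mulr_natr.
by apply: ler_sum => p _; apply: hpm.
Qed.



Lemma pc_ge0 (f : P -> R) : feasible M f -> forall p, 0 <= path_cost pth c f p.
Proof. by move=> hf p; apply: sumr_ge0 => e _; apply: Hc_ge0; apply: load_ge0. Qed.

Variable feq : P -> R.
Hypothesis Heq : wardrop_eq pth c M feq.
Variable p1 : P.
Hypothesis p1pos : 0 < feq p1.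
Let lam := path_cost pth c feq p1.

Lemma feqF : feasible M feq. Proof. by case: Heq. Qed.

Lemma lam_le p : lam <= path_cost pth c feq p.
Proof. by case: Heq => _ h; apply: h. Qed.

Lemma lam_eq p : 0 < feq p -> path_cost pth c feq p = lam.
Proof.
move=> hp; apply/eqP; rewrite eq_le lam_le andbT.
by case: Heq => _ h; apply: h.
Qed.

Lemma lam_ge0 : 0 <= lam.
Proof. exact: (pc_ge0 _ feqF p1). Qed.

Lemma eq_cost : social_cost pth c feq = M * lam.
Proof.
rewrite /social_cost (exch (fun e => c e (load pth feq e))).
have [f0 fs] := feqF.
rewrite -fs big_distrl /=; apply: eq_bigr => p _.
have [hp|hp] := ltP 0 (feq p); first by rewrite -/(path_cost pth c feq p) lam_eq.
have -> : feq p = 0 by apply/eqP; rewrite eq_le hp f0.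
by rewrite !mul0r.
Qed.

Lemma VI (f : P -> R) : feasible M f ->
  M * lam <= \sum_e load pth f e * c e (load pth feq e).
Proof.
move=> [f0 fs]; rewrite (exch (fun e => c e (load pth feq e))).
rewrite -fs big_distrl /=; apply: ler_sum => p _.
by rewrite ler_wpM2l // lam_le.
Qed.

Lemma czl e : 0 < load pth feq e -> c e (load pth feq e) <= lam.
Proof.
move=> hl.
have [[p ep fp]|h] := pselect (exists2 p, e \in pth p & 0 < feq p); last first.
  have : load pth feq e <= 0.
    apply: sumr_le0 => p ep; rewrite leNgt; apply/negP => fp; apply: h; by exists p.
  by rewrite leNgt hl.
rewrite -(lam_eq _ fp) /path_cost (big_rem e) //= lerDl.
by apply: sumr_ge0 => x _; apply: Hc_ge0; apply: load_ge0 _ feqF x.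
Qed.

Lemma lam_leK pD : lam <= \sum_(e <- pth pD) c e M.
Proof.
apply: (le_trans (lam_le pD)); apply: ler_sum => e _.
by apply: Hc_mono; [exact: (load_ge0 _ feqF e) | exact: (load_leM _ feqF e)].
Qed.
End Flow.

Arguments a_ge0 {R c q a}.
Arguments pth_nil {V E P tl hd o d pth} Hpaths p.
Arguments exch {R V E P tl hd o d pth} Hpaths g f.
Arguments load_ge0 {R E P pth M f} _ e.
Arguments load_leM {R E P pth M f} _ e.
Arguments load_ge {R E P pth M f} _ e p.
Arguments pos_flow {R P M} M0 {f} _.
Arguments max_flow {R P M} p0 {f} _.
Arguments feqF {R E P pth c M feq} Heq.
Arguments lam_ge0 {R E P pth c} Hc_ge0 {M feq} Heq p1.
Arguments eq_cost {R V E P tl hd o d pth c} Hpaths {M feq} Heq {p1} p1pos.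
Arguments VI {R V E P tl hd o d pth c} Hpaths {M feq} Heq {p1} p1pos {f} _.
Arguments czl {R E P pth c} Hc_ge0 {M feq} Heq {p1} p1pos e _.
Arguments lam_leK {R E P pth c} Hc_mono {M feq} Heq {p1} p1pos pD.
Arguments edge_all {R c q a}.
Arguments edge_up {R c q a}.
Arguments edge_low {R c q a}.
Arguments PE {R}.
Arguments PEH {R}.

Section Ev.
Variable R : realType.
Definition ev (A : R -> Prop) := exists X, 1 <= X /\ forall M, X <= M -> A M.

Lemma ev_and A B : ev A -> ev B -> ev (fun M => A M /\ B M).
Proof.
move=> [X [X1 HX]] [Y [Y1 HY]]; exists (Num.max X Y); split; first by rewrite le_max X1.
by move=> M; rewrite ge_max => /andP[h1 h2]; split; [apply: HX | apply: HY].
Qed.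

Lemma ev_imp (Q : Prop) A : (Q -> ev A) -> ev (fun M => Q -> A M).
Proof.
case: (pselect Q) => [q h|nq _]; last by exists 1; split => // M _ /nq.
by have [X [X1 HX]] := h q; exists X; split => // M XM _; apply: HX.
Qed.
End Ev.

Lemma sum_ge_each (R : realType) (I : finType) (F : I -> R) i :
  (forall j, 0 <= F j) -> F i <= \sum_j F j.
Proof.
move=> h; rewrite (bigD1 i) //= lerDl; apply: sumr_ge0 => j _; exact: h.
Qed.

Lemma bigmax_ge0 (R : realType) (E : eqType) (g : E -> R) (s : seq E) :
  0 <= \big[Num.max/0]_(e <- s) g e.
Proof. by elim: s => [|x s IH]; rewrite ?big_nil ?big_cons // le_max IH orbT. Qed.

Lemma bigmax_ge (R : realType) (E : eqType) (g : E -> R) (s : seq E) e :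
  e \in s -> g e <= \big[Num.max/0]_(x <- s) g x.
Proof.
elim: s => // x s IH; rewrite inE big_cons => /orP[/eqP->|/IH h].
  by rewrite le_max lexx.
by rewrite le_max h orbT.
Qed.

Lemma bigmax_lt (R : realType) (E : eqType) (g : E -> R) (s : seq E) t :
  0 < t -> (forall e, e \in s -> g e < t) -> \big[Num.max/0]_(x <- s) g x < t.
Proof.
move=> t0; elim: s => [|x s IH] h; rewrite ?big_nil ?big_cons // gt_max.
rewrite h ?mem_head //= IH // => e es; apply: h; by rewrite inE es orbT.
Qed.

Arguments bigmax_lt {R E g s t}.
Arguments bigmax_ge {R E g s e}.
Arguments sum_ge_each {R I F} i.
Arguments ev {R}.
Arguments ev_and {R A B}.
Arguments ev_imp {R Q A}.

Theorem corollary4p8 (R : realType) (V E P : finType)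
  (tl hd : E -> V) (o d : V) (pth : P -> seq E) (c : E -> R -> R)
  (Hpaths : forall p, is_od_path tl hd o d (pth p))
  (Hinj : injective pth)
  (p0 : P)
  (Hc_ge0 : forall e x, 0 <= x -> 0 <= c e x)
  (Hc_mono : forall e x y, 0 <= x -> x <= y -> c e x <= c e y)
  (Hc_cont : forall e, {within `[0, +oo[, continuous (c e)})
  (Hgrowth : forall e, exists q : R, 0 <= q /\
     exists l : R, l != 0 /\ (c e x / x `^ q) @[x --> +oo] --> l) :
  forall eps : R, 0 < eps -> exists M0 : R, forall M : R, 0 < M -> M0 <= M ->
    (exists f, feasible M f /\ social_cost pth c f = 0) \/
    (forall feq f, wardrop_eq pth c M feq -> feasible M f ->
       social_cost pth c feq <= (1 + eps) * social_cost pth c f).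
Proof.
move=> eps eps0.
have [qf Hqf] := choice Hgrowth.
have [lf Hlf] := choice (fun e => proj2 (Hqf e)).
have q0 e : 0 <= qf e := proj1 (Hqf e).
have hlim e : (c e x / x `^ qf e) @[x --> +oo] --> lf e := proj2 (Hlf e).
have a0 e : 0 < lf e.
  by rewrite lt0r (proj1 (Hlf e)) /=; apply: (a_ge0 (Hc_ge0 e) (hlim e)).
pose F p := \big[Num.max/0]_(e <- pth p) qf e.
have [pD HpD] : exists pD, forall p, F pD <= F p.
  by case: (@arg_minP _ _ _ p0 xpredT F isT) => i _ h; exists i => p; apply: h.
set D := F pD.
have D0 : 0 <= D by apply: bigmax_ge0.
have DpD e : e \in pth pD -> qf e <= D by move=> he; apply: bigmax_ge.
have Dp p : exists2 e, e \in pth p & D <= qf e.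
  have : ~~ all (fun e => qf e < D) (pth p).
    apply/negP => /allP h.
    have [e [s hs]] : exists e s, pth p = e :: s.
      by move: (pth_nil Hpaths p); case: (pth p) => // e s _; exists e, s.
    have he : e \in pth p by rewrite hs mem_head.
    have Dpos : 0 < D by apply: le_lt_trans (q0 e) (h e he).
    move: (bigmax_lt Dpos h); rewrite -/(F p) => hlt.
    by have := lt_le_trans hlt (HpD p); rewrite ltxx.
  by case/allPn => e he; rewrite -leNgt => h; exists e.
set n : R := #|P|%:R.
have n1 : 1 <= n by rewrite /n ler1n; apply/card_gt0P; exists p0.
have n0 : 0 < n by apply: lt_le_trans n1.
set Asum := 1 + \sum_e (lf e)^-1.
have Asum0 : 0 < Asum by rewrite ltr_wpDr // sumr_ge0 // => e _; rewrite invr_ge0 ltW.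
set amin := Asum^-1.
have amin0 : 0 < amin by rewrite invr_gt0.
have amin_le e : amin <= lf e.
  rewrite /amin -(invrK (lf e)) lef_pV2 ?posrE ?invr_gt0 //.
  rewrite /Asum ler_wpDl //; apply: (sum_ge_each e) => j.
  by rewrite invr_ge0 ltW.
set nu := n^-1 * n^-1 `^ D.
have nu0 : 0 < nu by rewrite mulr_gt0 ?invr_gt0 ?powR_gt0 ?invr_gt0.
set c0 := amin / 2 * nu.
have c00 : 0 < c0 by rewrite mulr_gt0 ?divr_gt0.
set K := \sum_(e <- pth pD) (lf e + 1).
have K0 : 0 <= K by rewrite sumr_ge0 // => e _; rewrite addr_ge0 // ltW.
set W := #|E|%:R * (D + 3).
have W0 : 0 <= W by rewrite mulr_ge0 // addr_ge0.
set Z := (D + 1) + W / c0.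
have Z0 : 0 < Z.
  by apply: ltr_wpDr; [rewrite divr_ge0 // ltW | apply: ltr_wpDl D0 ltr01].
set dl := eps / Z.
have dl0 : 0 < dl by rewrite divr_gt0.
have Hev : forall e, ev (fun M =>
   (forall z y lam, PEH (c e) K D M z y lam -> PE (c e) D dl M z y) /\
   (qf e <= D -> c e M <= (lf e + 1) * M `^ D) /\
   (D <= qf e -> forall y, M / n <= y -> lf e / 2 * nu * (M * M `^ D) <= y * c e y)).
  move=> e; apply: ev_and.
    exact: (edge_all (Hc_ge0 e) (Hc_mono e) (q0 e) (hlim e) _ _ _ (a0 e) D0 dl0 K0).
  apply: ev_and; apply: ev_imp => h.
    exact: (edge_up (Hc_ge0 e) (hlim e) _ h).
  exact: (edge_low (q0 e) (hlim e) _ _ (a0 e) h n1).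
have [Xf HXf] := choice Hev.
exists (1 + \sum_e Xf e) => M M0 MX; right => feq f Heq Hf.
have XM e : Xf e <= M.
  have [X1 _] := HXf e.
  apply: le_trans MX; rewrite ler_wpDl //; apply: (sum_ge_each e) => j.
  by have [X1' _] := HXf j; apply: le_trans X1'.
have HM e := (proj2 (HXf e)) M (XM e).
have Heqf := feqF Heq.
have [p1 p1pos] := pos_flow M0 Heqf.
set lam := path_cost pth c feq p1.
have HPE e : PE (c e) D dl M (load pth feq e) (load pth f e).
  apply: (proj1 (HM e) _ _ lam); split.
  - by apply/andP; split; [exact: load_ge0 Heqf e | exact: load_leM Heqf e].
  - by apply/andP; split; [exact: load_ge0 Hf e | exact: load_leM Hf e].
  - apply/andP; split; first by have h := lam_ge0 Hc_ge0 Heq p1; exact: h.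
    have h2 := lam_leK Hc_mono Heq p1pos pD; apply: le_trans h2 _.
    rewrite /K big_distrl /= big_seq [X in _ <= X]big_seq; apply: ler_sum => e' he'.
    exact: (proj1 (proj2 (HM e')) (DpD e' he')).
  - by have h3 := czl Hc_ge0 Heq p1pos e; exact: h3.
have Hsum : \sum_e (load pth feq e * c e (load pth feq e) +
      (D + 1) * (c e (load pth feq e) * (load pth f e - load pth feq e))) <=
    \sum_(e : E) ((1 + (D + 1) * dl) * (load pth f e * c e (load pth f e)) +
      (D + 3) * dl * (M * M `^ D)).
  by apply: ler_sum => e _; apply: HPE.
rewrite big_split /= -big_distrr /= big_split /= -big_distrr /= sumr_const in Hsum.
have VIs : 0 <= \sum_e c e (load pth feq e) * (load pth f e - load pth feq e).
  have -> : \sum_e c e (load pth feq e) * (load pth f e - load pth feq e) =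
      \sum_e load pth f e * c e (load pth feq e) - social_cost pth c feq.
    rewrite /social_cost -sumrB; apply: eq_bigr => e _; ring.
  by rewrite (eq_cost Hpaths Heq p1pos) subr_ge0 (VI Hpaths Heq p1pos Hf).
have [pm hpm] := max_flow p0 Hf.
have [e he De] := Dp pm.
have ye : M / n <= load pth f e := le_trans hpm (load_ge Hf e pm he).
have Lterm_ge0 e' : 0 <= load pth f e' * c e' (load pth f e').
  have l0 := load_ge0 Hf e'; by rewrite mulr_ge0 // Hc_ge0.
have Llow : c0 * (M * M `^ D) <= social_cost pth c f.
  have MMD : 0 <= M * M `^ D by rewrite mulr_ge0 ?powR_ge0 // ltW.
  apply: (@le_trans _ _ (lf e / 2 * nu * (M * M `^ D))).
    apply: ler_wpM2r => //; apply: ler_wpM2r; first exact: ltW.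
    by apply: ler_wpM2r => //; apply: amin_le.
  apply: le_trans (proj2 (proj2 (HM e)) De _ ye) _.
  exact: (sum_ge_each (F := fun e => load pth f e * c e (load pth f e)) e Lterm_ge0).
rewrite -/(social_cost pth c feq) -/(social_cost pth c f) in Hsum.
move: Hsum Llow VIs.
set Eq := social_cost pth c feq.
set L := social_cost pth c f.
set T := M * M `^ D.
set SV := \sum_e _.
move=> Hsum Llow VIs.
have e1 : (D + 3) * dl * T *+ #|E| = dl * W * T.
  by rewrite /W -mulr_natr; ring.
rewrite e1 in Hsum.
have TL : T <= L / c0 by rewrite ler_pdivlMr // mulrC.
have h1 : dl * W * T <= dl * W * (L / c0).
  by apply: ler_wpM2l => //; rewrite mulr_ge0 // ltW.
have h2 : 0 <= (D + 1) * SV by rewrite mulr_ge0 // addr_ge0.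
have e2 : (1 + (D + 1) * dl) * L + dl * W * (L / c0) = (1 + eps) * L.
  rewrite /dl /Z; field.
  rewrite (gt_eqF c00) /= gt_eqF //; apply: ltr_wpDr => //.
  by rewrite mulr_gt0 // ltr_wpDl.
rewrite -e2.
lra.
Qed.
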